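(* Let $\mathsf{k}$ be a field of characteristic zero, $S=\mathsf{k}[x_1,\dots,x_n]$ with $n\ge 2$, and $R=\mathsf{k}[X_1,\dots,X_n]$, with $S$ acting on $R$ by differentiation. Let $F\in R$ be a nonzero homogeneous polynomial of degree $d\ge 2$, let $A=S/\operatorname{Ann}_S(F)$, and let $\ell\in S_1$ be a linear form. Then for every $0\le i\le d$, $$\operatorname{diag}(i,M_{\ell,A})=h_{A^{(i)}},$$ i.e. $(M_{\ell,A})_{j,j+i}=\dim_{\mathsf{k}}\big(A^{(i)}\big)_j$ for all $0\le j\le d-i$.
   Context: $x_i$ acts on $R$ as $\partial/\partial X_i$; for $G\in R$, $\operatorname{Ann}_S(G)=\{g\in S: g\circ G=0\}$. $A=S/\operatorname{Ann}_S(F)$ is a graded Artinian Gorenstein algebra of socle degree $d$. For a graded algebra $B$, $h_B(j)=\dim_{\mathsf{k}}B_j$ is its Hilbert function. For $0\le i\le d$, $A^{(i)}:=S/\operatorname{Ann}_S(\ell^i\circ F)$ (the zero algebra if $\ell^i\circ F=0$), whose Hilbert function is viewed as the vector $(h_{A^{(i)}}(0),\dots,h_{A^{(i)}}(d-i))$. The rank matrix $M_{\ell,A}$ is the $(d+1)\times(d+1)$ matrix with rows and columns indexed by $0,\dots,d$, with $(M_{\ell,A})_{i,j}=\operatorname{rank}(\times\ell^{j-i}:A_i\to A_j)$ for $i\le j$ and $(M_{\ell,A})_{i,j}=0$ for $i>j$. For a $(d+1)\times(d+1)$ matrix $M$ and $0\le i\le d$, $\operatorname{diag}(i,M)=(M_{0,i},M_{1,i+1},\dots,M_{d-i,d})$.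 *)

(* Defs.v *)
From HB Require Import structures.
From mathcomp Require Import all_boot all_order all_algebra.
From mathcomp Require Import mpoly.
From Stdlib Require Import ClassicalEpsilon.

Set Implicit Arguments.
Unset Strict Implicit.
Unset Printing Implicit Defensive.

Import Order.TTheory GRing.Theory.
Local Open Scope ring_scope.

Section Apolarity.
Variables (k : fieldType) (n : nat).
Local Notation Poly := {mpoly k[n]}.

(* Contraction/differentiation action of S = k[x_1..x_n] on R = k[X_1..X_n]:
   both rings are modelled by {mpoly k[n]}; the monomial x^m acts as the
   partial derivative d^m/dX^m, extended k-linearly. *)
Definition act (g G : Poly) : Poly :=
  \sum_(m <- msupp g) g@_m *: G^`M[m].

Definition indep_mod_ann (G : Poly) (r : nat) (f : 'I_r -> Poly) : Prop :=
  forall c : 'I_r -> k,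
    act (\sum_(t < r) c t *: f t) G = 0 -> forall t, c t = 0.

(* r is the dimension of the subspace of S/Ann_S(G) spanned by the classes
   of the elements of V: the maximal number of elements of V whose classes
   are linearly independent. *)
Definition is_quot_dim (G : Poly) (V : Poly -> Prop) (r : nat) : Prop :=
  (exists f : 'I_r -> Poly, (forall t, V (f t)) /\ indep_mod_ann G f) /\
  (forall f : 'I_r.+1 -> Poly, (forall t, V (f t)) -> ~ indep_mod_ann G f).

Definition quot_dim (G : Poly) (V : Poly -> Prop) : nat :=
  epsilon (inhabits 0%N) (is_quot_dim G V).

(* Hilbert function of S/Ann_S(G): h(j) = dim_k (S/Ann_S(G))_j,
   the span of the classes of degree-j forms. (For G = 0 this is the zero
   algebra, with h = 0.) *)
Definition hilb (G : Poly) (j : nat) : nat :=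
  quot_dim G (fun p => p \is j.-homog).

(* rank of  x l^(j-i) : A_i -> A_j  where A = S/Ann_S(F): the dimension of the
   image, spanned by the classes of l^(j-i) g, g in S_i. *)
Definition rank_mul (l F : Poly) (i j : nat) : nat :=
  quot_dim F (fun p => exists g : Poly, g \is i.-homog /\ p = l ^+ (j - i) * g).

Definition rank_matrix (l F : Poly) (d : nat) : 'M[nat]_d.+1 :=
  \matrix_(i < d.+1, j < d.+1) (if (i <= j)%N then rank_mul l F i j else 0%N).

End Apolarity.

Definition mdiag (d i : nat) (M : 'M[nat]_d.+1) : seq nat :=
  [seq M (inord j) (inord (j + i)) | j <- iota 0 (d - i).+1].

Definition hilb_vec (k : fieldType) (n : nat) (G : {mpoly k[n]}) (m : nat)
  : seq nat := [seq hilb G j | j <- iota 0 m.+1].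

(* Main.v *)
Require Import Defs.
From HB Require Import structures.
From mathcomp Require Import all_boot all_order all_algebra.
From mathcomp Require Import ssrcomplements mpoly.
From mathcomp Require Import zify.
From Stdlib Require Import ClassicalEpsilon FunctionalExtensionality PropExtensionality.

Set Implicit Arguments.
Unset Strict Implicit.
Unset Printing Implicit Defensive.
Import GRing.Theory.
Local Open Scope ring_scope.

Section Aux.
Variables (k : fieldType) (n : nat).
Local Notation Poly := {mpoly k[n]}.

Lemma actE (b : nat) (g G : Poly) : (msize g <= b)%N ->
  act g G = \sum_(m : 'X_{1..n < b}) g@_m *: G^`M[m].
Proof.
move=> le_pi; set I : subFinType _ := 'X_{1..n < b}.
rewrite /act (big_mksub I) ?msupp_uniq //=; first last.
  by move=> x /msize_mdeg_lt /leq_trans; apply.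
rewrite big_rmcond //= => j /memN_msupp_eq0 ->.
by rewrite scale0r.
Qed.

Lemma actD (g1 g2 G : Poly) : act (g1 + g2) G = act g1 G + act g2 G.
Proof.
pose b := (msize g1 + msize g2 + msize (g1 + g2)).+1.
rewrite !(actE (b:=b)); try by rewrite /b; lia.
rewrite -big_split /=; apply: eq_bigr => m _; by rewrite mcoeffD scalerDl.
Qed.

Lemma actZ (c : k) (g G : Poly) : act (c *: g) G = c *: act g G.
Proof.
pose b := (msize g + msize (c *: g)).+1.
rewrite !(actE (b:=b)); try by rewrite /b; lia.
rewrite scaler_sumr; apply: eq_bigr => m _; by rewrite mcoeffZ scalerA.
Qed.

Lemma act0 (G : Poly) : act 0 G = 0.
Proof. by rewrite /act msupp0 big_nil. Qed.

Lemma actDr (g G1 G2 : Poly) : act g (G1 + G2) = act g G1 + act g G2.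
Proof.
rewrite /act -big_split /=; apply: eq_bigr => m _.
by rewrite mderivmD scalerDr.
Qed.

Lemma actZr (c : k) (g G : Poly) : act g (c *: G) = c *: act g G.
Proof.
rewrite /act scaler_sumr; apply: eq_bigr => m _.
by rewrite mderivmZ !scalerA mulrC.
Qed.

Lemma actX (m : 'X_{1..n}) (G : Poly) : act 'X_[m] G = G^`M[m].
Proof. by rewrite /act msuppX big_seq1 mcoeffX eqxx scale1r. Qed.

Lemma act_sum (r : nat) (c : 'I_r -> k) (f : 'I_r -> Poly) (G : Poly) :
  act (\sum_(t < r) c t *: f t) G = \sum_(t < r) c t *: act (f t) G.
Proof.
elim/big_rec2: _ => [|t x y _ H]; first by rewrite act0.
by rewrite actD actZ H.
Qed.

Lemma act_mulX (m : 'X_{1..n}) (b G : Poly) :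
  act ('X_[m] * b) G = act b (act 'X_[m] G).
Proof.
elim/mpolyind: b => [|c m' p _ _ ih].
  by rewrite mulr0 act0 act0.
rewrite mulrDr actD ih -scalerAr actZ -mpolyXD !actD !actZ !actX.
by rewrite mderivmDm.
Qed.

Lemma act_mul (a b G : Poly) : act (a * b) G = act b (act a G).
Proof.
elim/mpolyind: a => [|c m p _ _ ih].
  by rewrite mul0r !act0 /act big1 // => m _; rewrite (raddf0 (mderivm m)) scaler0.
rewrite mulrDl actD ih -scalerAl actZ act_mulX.
by rewrite actD actZ actDr actZr.
Qed.

End Aux.

Lemma indep_iff (k : fieldType) (n : nat) (F L : {mpoly k[n]}) (r : nat)
  (f g : 'I_r -> {mpoly k[n]}) : (forall t, f t = L * g t) ->
  indep_mod_ann F f <-> indep_mod_ann (act L F) g.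
Proof.
move=> hf.
have E c : act (\sum_(t < r) c t *: f t) F = act (\sum_(t < r) c t *: g t) (act L F).
  rewrite -act_mul mulr_sumr; congr act; apply: eq_bigr => t _.
  by rewrite hf scalerAr.
by split => H c; [rewrite -E | rewrite E]; apply: H.
Qed.

Lemma choose_g (k : fieldType) (n : nat) (L : {mpoly k[n]}) (j r : nat)
  (f : 'I_r -> {mpoly k[n]}) :
  (forall t, exists g : {mpoly k[n]}, g \is j.-homog /\ f t = L * g) ->
  exists g : 'I_r -> {mpoly k[n]}, forall t, g t \is j.-homog /\ f t = L * g t.
Proof.
move=> H; exists (fun t => proj1_sig (constructive_indefinite_description _ (H t))).
by move=> t; case: (constructive_indefinite_description _ (H t)).
Qed.

Lemma quot_iff (k : fieldType) (n : nat) (F L : {mpoly k[n]}) (j r : nat) :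
  is_quot_dim F (fun p => exists g, g \is j.-homog /\ p = L * g) r <->
  is_quot_dim (act L F) (fun p => p \is j.-homog) r.
Proof.
split.
- case=> [[f [Vf If]] H2]; split.
    have [g Hg] := choose_g Vf.
    exists g; split; first by move=> t; case: (Hg t).
    by apply/(@indep_iff _ _ F L r f g) => // t; case: (Hg t).
  move=> g Vg Ig; apply: (H2 (fun t => L * g t)).
    by move=> t; exists (g t).
  by apply/(@indep_iff _ _ F L r.+1 (fun t => L * g t) g).
- case=> [[g [Vg Ig]] H2]; split.
    exists (fun t => L * g t); split; first by move=> t; exists (g t).
    by apply/(@indep_iff _ _ F L r (fun t => L * g t) g).
  move=> f Vf If; have [g' Hg] := choose_g Vf.
  apply: (H2 g'); first by move=> t; case: (Hg t).
  by apply/(@indep_iff _ _ F L r.+1 f g') => // t; case: (Hg t).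
Qed.

Theorem proposition3p4 (k : fieldType) (hchar : [pchar k] =i pred0)
  (n : nat) (hn : (2 <= n)%N) (d : nat) (hd : (2 <= d)%N)
  (F : {mpoly k[n]}) (hF0 : F != 0) (hFd : F \is d.-homog)
  (l : {mpoly k[n]}) (hl : l \is 1.-homog) (i : nat) (hi : (i <= d)%N) :
  mdiag i (rank_matrix l F d) = hilb_vec (act (l ^+ i) F) (d - i).
Proof.
rewrite /mdiag /hilb_vec; apply/eq_in_map => j; rewrite mem_iota add0n ltnS => /andP [_ hj].
have hji : (j + i <= d)%N by rewrite -(subnK hi) leq_add2r.
rewrite mxE !inordK ?ltnS //; last by apply: leq_trans hj (leq_subr _ _).
rewrite leq_addr /rank_mul /hilb /quot_dim addKn.
congr (epsilon _); apply: functional_extensionality => r.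
apply: propositional_extensionality; exact: quot_iff.
Qed.
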